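(* Suppose $\bar f$, $f$, $g$ satisfy $V(\bar f,f)=0$. Then for all $x_1,x_2$, $$\frac{(f-x_1)\,V(x_2,f)}{(\bar f-x_2)\,V(\bar f,x_1)}=\frac{(h_1-h_2q)\,\varphi}{(h_1-h_2)\,\varphi_u},$$ where $\varphi=\varphi(f,g)$ and $V(\cdot,\cdot)$ is evaluated at the same $g$.
   Context: Let $h_1,h_2,u_1,\dots,u_8$ be generic nonzero complex parameters and $q=h_1^2h_2^2/(u_1\cdots u_8)$. Let $\varphi(f,g)=(f-g)\big(\frac{f}{h_1}-\frac{g}{h_2}\big)-(h_1-h_2)\big(\frac1{h_1}-\frac1{h_2}\big)$ and $\varphi_u=(\bar f-g)\big(\frac{q\bar f}{h_1}-\frac{g}{h_2}\big)-(\frac{h_1}{q}-h_2)\big(\frac q{h_1}-\frac1{h_2}\big)$ (i.e. $\varphi$ with $f\to\bar f$, $h_1\to h_1/q$). Let $U(z)=\prod_{i=1}^8(z-u_i)=\sum_{i=0}^8(-1)^i m_{8-i}z^i$ (so $m_0=1$, $m_8=h_1^2h_2^2/q$). For a parameter $h$ define polynomials in $g$: $P_n(h,g)=m_0g^4-m_1g^3+(m_2-3hm_0-h^{-3}m_8)g^2+(2hm_1-m_3+h^{-2}m_7)g+(h^2m_0-hm_2+m_4-h^{-1}m_6+h^{-2}m_8)$, $P_d(h,g)=m_8g^4-hm_7g^3+(h^2m_6-3hm_8-h^5m_0)g^2+(2h^2m_7-h^3m_5+h^5m_1)g+(h^6m_0-h^5m_2+h^4m_4-h^3m_6+h^2m_8)$.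 Define, for variables $f_0,f,g$, $V(f_0,f)=q\Big[(f_0-g)(f-g)-\big(\tfrac{h_1}{q}-h_2\big)(h_1-h_2)\tfrac1{h_2}\Big]P_d(h_2,g)-h_1^2h_2^4\Big[\big(\tfrac{f_0q}{h_1}-\tfrac{g}{h_2}\big)\big(\tfrac{f}{h_1}-\tfrac{g}{h_2}\big)-\big(\tfrac{q}{h_1}-\tfrac1{h_2}\big)\big(\tfrac1{h_1}-\tfrac1{h_2}\big)h_2\Big]P_n(h_2,g)$ (it also depends on $g$). *)

(* Defs.v *)
From HB Require Import structures.
From mathcomp Require Import all_boot all_order all_algebra.
Set Implicit Arguments. Unset Strict Implicit. Unset Printing Implicit Defensive.
Import Order.TTheory GRing.Theory Num.Theory.
Local Open Scope ring_scope.

Section Defs.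
Variable C : fieldType.

Definition qpar (h1 h2 : C) (u : 'I_8 -> C) : C :=
  h1 ^+ 2 * h2 ^+ 2 / \prod_(i < 8) u i.

Definition Upoly (u : 'I_8 -> C) : {poly C} := \prod_(i < 8) ('X - (u i)%:P).

(* U(z) = sum_{i=0}^8 (-1)^i m_{8-i} z^i, i.e. m_k = (-1)^(8-k) * coeff_{8-k}... 
   precisely: coefficient of z^i is (-1)^i m_{8-i}, so m_k = (-1)^(8-k) U`_(8-k). *)
Definition mcoef (u : 'I_8 -> C) (k : nat) : C :=
  (-1) ^+ (8 - k) * (Upoly u)`_(8 - k).

Definition varphi (h1 h2 f g : C) : C :=
  (f - g) * (f / h1 - g / h2) - (h1 - h2) * (h1^-1 - h2^-1).

Definition varphi_u (h1 h2 : C) (u : 'I_8 -> C) (fb g : C) : C :=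
  let q := qpar h1 h2 u in
  (fb - g) * (q * fb / h1 - g / h2) - (h1 / q - h2) * (q / h1 - h2^-1).

Definition Pn (u : 'I_8 -> C) (h g : C) : C :=
  let m := mcoef u in
  m 0%N * g ^+ 4 - m 1%N * g ^+ 3
  + (m 2%N - 3 * h * m 0%N - h ^- 3 * m 8%N) * g ^+ 2
  + (2 * h * m 1%N - m 3%N + h ^- 2 * m 7%N) * g
  + (h ^+ 2 * m 0%N - h * m 2%N + m 4%N - h^-1 * m 6%N + h ^- 2 * m 8%N).

Definition Pd (u : 'I_8 -> C) (h g : C) : C :=
  let m := mcoef u in
  m 8%N * g ^+ 4 - h * m 7%N * g ^+ 3
  + (h ^+ 2 * m 6%N - 3 * h * m 8%N - h ^+ 5 * m 0%N) * g ^+ 2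
  + (2 * h ^+ 2 * m 7%N - h ^+ 3 * m 5%N + h ^+ 5 * m 1%N) * g
  + (h ^+ 6 * m 0%N - h ^+ 5 * m 2%N + h ^+ 4 * m 4%N - h ^+ 3 * m 6%N
     + h ^+ 2 * m 8%N).

Definition Vfun (h1 h2 : C) (u : 'I_8 -> C) (g f0 f : C) : C :=
  let q := qpar h1 h2 u in
  q * ((f0 - g) * (f - g) - (h1 / q - h2) * (h1 - h2) / h2) * Pd u h2 g
  - h1 ^+ 2 * h2 ^+ 4 *
    ((f0 * q / h1 - g / h2) * (f / h1 - g / h2)
     - (q / h1 - h2^-1) * (h1^-1 - h2^-1) * h2) * Pn u h2 g.

End Defs.

(* Main.v *)
Require Import Defs.
From HB Require Import structures.
From mathcomp Require Import all_boot all_order all_algebra.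
From Stdlib Require Import Ring Field.
Import Order.TTheory GRing.Theory Num.Theory.
Local Open Scope ring_scope.

Lemma CRth (C : comNzRingType) : ring_theory (0:C) 1 +%R *%R (fun x y => x - y) -%R eq.
Proof.
split=> //; [exact: add0r|exact: addrC|exact: addrA|exact: mul1r|exact: mulrC|exact: mulrA|exact: mulrDl|exact: subrr].
Qed.
Lemma CFth (C : fieldType) : @field_theory (GRing.PzSemiRing.sort C) 0 1 +%R *%R (fun x y => x - y) -%R (fun x y => x / y) GRing.inv eq.
Proof.
split=> //; first exact: CRth.
- by move=> h; move: (oner_neq0 C); rewrite h eqxx.
- by move=> p /eqP; exact: mulVf.
Qed.

Set Implicit Arguments. Unset Strict Implicit.
Section T.
Variable C : fieldType.
Definition fadd (x y : C) : C := x + y.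
Definition fmul (x y : C) : C := x * y.
Definition fopp (x : C) : C := - x.
Definition finv (x : C) : C := x^-1.
Definition fzero : C := 0.
Definition fone : C := 1.
Definition FFth : field_theory fzero fone fadd fmul (fun x y => fadd x (fopp y)) fopp (fun x y => fmul x (finv y)) finv (@eq C) := CFth C.
Add Field FF : FFth.
Lemma toFadd (x y : C) : x + y = fadd x y. Proof. by []. Qed.
Lemma toFmul (x y : C) : x * y = fmul x y. Proof. by []. Qed.
Lemma toFopp (x : C) : - x = fopp x. Proof. by []. Qed.
Lemma toFinv (x : C) : x^-1 = finv x. Proof. by []. Qed.
Lemma toF0 : 0 = fzero :> C. Proof. by []. Qed.
Lemma Feq (x y : C) : @eq (GRing.Field.sort C) x y -> x = y. Proof. by []. Qed.
Ltac toF := refine (Feq _); rewrite ?toFinv ?toFopp ?toFadd ?toFmul ?toF0.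
Lemma core (h1 h2 q P1 K P2 g fb f x1 x2 : C) :
 h1 != 0 -> h2 != 0 -> q != 0 ->
 let V f0 f := q * ((f0 - g) * (f - g) - (h1 / q - h2) * (h1 - h2) / h2) * P1
    - K * ((f0 * q / h1 - g / h2) * (f / h1 - g / h2)
     - (q / h1 - h2^-1) * (h1^-1 - h2^-1) * h2) * P2 in
 let phi := (f - g) * (f / h1 - g / h2) - (h1 - h2) * (h1^-1 - h2^-1) in
 let phiu := (fb - g) * (q * fb / h1 - g / h2) - (h1 / q - h2) * (q / h1 - h2^-1) in
 V fb f = 0 -> fb - x2 != 0 -> V fb x1 != 0 -> h1 - h2 != 0 -> phiu != 0 ->
 (f - x1) * V x2 f / ((fb - x2) * V fb x1) = (h1 - h2 * q) * phi / ((h1 - h2) * phiu).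
Proof.
move=> h1n h2n qn V phi phiu hV hx2 hV1 h12 hpu.
have h1n' : h1 <> fzero by apply/eqP.
have h2n' : h2 <> fzero by apply/eqP.
have qn' : q <> fzero by apply/eqP.
set Av := q * P1 * (f - g) - K * P2 * (q / h1) * (f / h1 - g / h2).
set Bv := q * P1 * (fb - g) - K * P2 * (fb * q / h1 - g / h2) / h1.
have e2 : V x2 f = (x2 - fb) * Av + V fb f.
  rewrite /V /Av; toF; field; tauto.
have e1 : V fb x1 = (x1 - f) * Bv + V fb f.
  rewrite /V /Bv; toF; field; tauto.
rewrite e1 hV addr0 in hV1.
rewrite e2 e1 hV !addr0.
have [hxf hB] : x1 - f != 0 /\ Bv != 0.
  by move: hV1; rewrite mulf_eq0 negb_or => /andP.
set W2 := (fb - g) * (f - g) - (h1 / q - h2) * (h1 - h2) / h2.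
set W1 := (fb * q / h1 - g / h2) * (f / h1 - g / h2) - (q / h1 - h2^-1) * (h1^-1 - h2^-1) * h2.
have key : Av * ((h1 - h2) * phiu) - (h1 - h2 * q) * phi * Bv = 0.
  set D := (X in X = 0).
  have d2 : W2 * D = V fb f * ((h1 - h2) * phiu * (f - g) - (h1 - h2 * q) * phi * (fb - g)).
    rewrite /D /V /W2 /Av /Bv /phi /phiu; toF; field; tauto.
  have d1 : W1 * D = V fb f * ((h1 - h2) * phiu * (q / h1) * (f / h1 - g / h2)
                  - (h1 - h2 * q) * phi * (fb * q / h1 - g / h2) / h1).
    rewrite /D /V /W1 /Av /Bv /phi /phiu; toF; field; tauto.
  rewrite hV mul0r in d1. rewrite hV mul0r in d2.
  have [w2|w2] := eqVneq W2 0; last by move/eqP: d2; rewrite mulf_eq0 (negbTE w2) => /eqP.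
  have [w1|w1] := eqVneq W1 0; last by move/eqP: d1; rewrite mulf_eq0 (negbTE w1) => /eqP.
  have ephi : g * (h1 - h2) * phiu = - h1 * h2 * (W1 * (fb - g) - W2 * (fb * q / h1 - g / h2) / h1).
    rewrite /W1 /W2 /phiu; toF; field; tauto.
  rewrite w1 w2 !mul0r subrr mulr0 in ephi.
  have g0 : g = 0.
    by move/eqP: ephi; rewrite !mulf_eq0 (negbTE h12) (negbTE hpu) !orbF => /eqP.
  have eD : D = (q * P1 - q * K * P2 / h1 / h1) * W2 * (q * fb / h1 * (h1 - h2) - f / h1 * (h1 - h2 * q)).
    rewrite /D /W2 /Av /Bv /phi /phiu g0; toF; field; tauto.
  by rewrite eD w2 mulr0 mul0r.
apply/eqP; rewrite eqr_div; last first.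
- by rewrite mulf_neq0.
- by rewrite !mulf_neq0 // subr_eq0 eq_sym -subr_eq0.
apply/eqP.
transitivity ((f - x1) * (x2 - fb) * (Av * ((h1 - h2) * phiu))); first by toF; field; tauto.
move/eqP: key; rewrite subr_eq0 => /eqP ->.
toF; field; tauto.
Qed.
End T.

Theorem lemma1 (C : numClosedFieldType) (h1 h2 : C) (u : 'I_8 -> C)
    (fb f g x1 x2 : C) :
  h1 != 0 -> h2 != 0 -> (forall i, u i != 0) ->
  Vfun h1 h2 u g fb f = 0 ->
  fb - x2 != 0 -> Vfun h1 h2 u g fb x1 != 0 ->
  h1 - h2 != 0 -> varphi_u h1 h2 u fb g != 0 ->
  (f - x1) * Vfun h1 h2 u g x2 f / ((fb - x2) * Vfun h1 h2 u g fb x1)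
  = (h1 - h2 * qpar h1 h2 u) * varphi h1 h2 f g
    / ((h1 - h2) * varphi_u h1 h2 u fb g).
Proof.
move=> h1n h2n un hV hx hV1 h12 hpu.
have qn : qpar h1 h2 u != 0.
  rewrite /qpar mulf_neq0 ?invr_eq0 ?mulf_neq0 ?expf_neq0 //.
  by apply/prodf_neq0 => i _; exact: un.
exact: (@core C h1 h2 (qpar h1 h2 u) (Pd u h2 g) (h1 ^+ 2 * h2 ^+ 4) (Pn u h2 g) g fb f x1 x2 h1n h2n qn hV hx hV1 h12 hpu).
Qed.
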